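(* If an analytic function $f(z)=\sum_{n\ge0}f_nz^n$ on $\mathbb{D}$ satisfies $\sup_{n\ge0}|f_n|e^{c\sqrt n}<\infty$ for some $c>0$, then there exists $c'>0$ such that, with $G(t)=\exp(-c'/t)$ and $M_n=\int_{\mathbb{D}}G(1-|z|)|z|^{2n}\,dA(z)$, one has $\sum_{n\ge0}|f_n|^2/M_n<\infty$, i.e. $f\in H_2^*(M)$ for $M=\{M_n\}_{n\ge0}$.
   Context: $\mathbb{D}$ is the unit disk and $dA$ area measure normalized so that $A(\mathbb{D})=1$. $H_2^*(M)$ denotes the space of power series $\sum f_nz^n$ with $\sum_n|f_n|^2/M_n<\infty$. *)

(* Defs.v *)
From HB Require Import structures.
From mathcomp Require Import all_boot all_order all_algebra.
From mathcomp Require Import all_classical all_reals all_analysis.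
From mathcomp Require Import complex.
Set Implicit Arguments. Unset Strict Implicit. Unset Printing Implicit Defensive.
Import Order.TTheory GRing.Theory Num.Theory.
Import numFieldNormedType.Exports.
Local Open Scope classical_set_scope.
Local Open Scope ring_scope.

Definition cmod (R : realType) (z : R[i]) : R := ComplexField.Normc.normc z.

(* Points of the plane R^2 = C, z = x + i y represented as (x, y). *)
Definition pmod (R : realType) (z : R * R) : R := Num.sqrt (z.1 ^+ 2 + z.2 ^+ 2).

Definition unit_disk (R : realType) : set (R * R) := [set z | pmod z < 1].

(* Normalized area measure dA = (1/pi) dx dy, so A(D) = 1. Integral over D
   of a nonnegative real function g with respect to dA. *)
Definition dA_integral_disk (R : realType) (g : R * R -> R) : \bar R :=
  ((pi : R)^-1)%:E *
  (\int[(@lebesgue_measure R) \x (@lebesgue_measure R)]_(z in @unit_disk R) (g z)%:E)%E.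

Definition Gfun (R : realType) (c' : R) (t : R) : R := expR (- (c' / t)).

(* M_n = \int_D G(1 - |z|) |z|^{2n} dA(z)  (a real number; the integral is finite) *)
Definition Mseq (R : realType) (c' : R) (n : nat) : R :=
  fine (dA_integral_disk (fun z => Gfun c' (1 - pmod z) * pmod z ^+ (2 * n))).

Definition in_H2star (R : realType) (M : nat -> R) (f : nat -> R[i]) : Prop :=
  (\sum_(0 <= n <oo) ((cmod (f n)) ^+ 2 / M n)%:E < +oo)%E.

(* Main.v *)
Require Import Defs.
From HB Require Import structures.
From mathcomp Require Import all_boot all_order all_algebra.
From mathcomp Require Import all_classical all_reals all_analysis.
From mathcomp Require Import complex.
From mathcomp Require Import ring lra measurable_realfun.
Import Order.TTheory GRing.Theory Num.Theory.
Import numFieldNormedType.Exports.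
Local Open Scope ring_scope.

Section S.
Variable R : realType.
Local Open Scope classical_set_scope.

Lemma pmod_ge0 (z : R * R) : 0 <= pmod z.
Proof. exact: sqrtr_ge0. Qed.

Lemma pmod_meas : measurable_fun [set: R * R] (@pmod R).
Proof.
rewrite (_ : @pmod R = Num.sqrt \o (fun z : R * R => z.1 ^+ 2 + z.2 ^+ 2)) //.
apply: measurableT_comp.
  exact: continuous_measurable_fun (@sqrt_continuous R).
apply: measurable_funD; apply: measurable_funX.
  exact: measurable_fst.
exact: measurable_snd.
Qed.

Lemma disk_meas : measurable (@unit_disk R).
Proof.
rewrite (_ : @unit_disk R = [set: R * R] `&` (@pmod R) @^-1` `]-oo, 1[%classic).
  exact: pmod_meas measurableT _ (measurable_itv _).
by rewrite /unit_disk; apply/seteqP; split => z /=; rewrite in_itv /=; [by move=> h; split | by case].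
Qed.

Definition kk (c' t : R) : R := if 0 < t then expR (- (c' / t)) else 0.

Lemma kk_nd (c' : R) : 0 <= c' -> {homo kk c' : x y / x <= y}.
Proof.
move=> c0 x y xy; rewrite /kk.
case: ifPn => x0; last by case: ifP => _ //; exact: expR_ge0.
have y0 : 0 < y by exact: lt_le_trans xy.
rewrite y0 ler_expR lerN2 ler_wpM2l // lef_pV2 // posrE //.
Qed.

Definition gg (c' : R) (n : nat) (z : R * R) : R :=
  Gfun c' (1 - pmod z) * pmod z ^+ (2 * n).

Local Notation mu := ((@lebesgue_measure R) \x (@lebesgue_measure R))%E.

Lemma gg_meas c' n : 0 <= c' ->
  measurable_fun (@unit_disk R) (fun z => (gg c' n z)%:E).
Proof.
move=> c0; apply/measurable_EFinP.
apply: (eq_measurable_fun (fun z => kk c' (1 - pmod z) * pmod z ^+ (2 * n))).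
  move=> z; rewrite inE /unit_disk /= => hz.
  by rewrite /gg /kk /Gfun subr_gt0 hz.
apply: (measurable_funS measurableT (subsetT _)).
apply: measurable_funM; last exact: measurable_funX (pmod_meas).
apply: (measurableT_comp (f := kk c')).
  by apply: nondecreasing_measurable => //; exact: kk_nd.
apply: measurable_funB; [exact: measurable_cst | exact: pmod_meas].
Qed.

Lemma gg_ge0 c' n z : 0 <= gg c' n z.
Proof. by rewrite /gg /Gfun mulr_ge0 // ?expR_ge0 // exprn_ge0 // pmod_ge0. Qed.


Lemma gg_le1 c' n z : 0 <= c' -> unit_disk z -> gg c' n z <= 1.
Proof.
move=> c0; rewrite /unit_disk /= => hz; rewrite /gg /Gfun.
rewrite -[1]mulr1 ler_pM ?expR_ge0 ?exprn_ge0 ?pmod_ge0 //.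
  rewrite mulr1; apply: (@le_trans _ _ (expR 0)); last by rewrite expR0.
  by rewrite ler_expR oppr_le0 divr_ge0 // subr_ge0 ltW.
by apply: exprn_ile1; rewrite ?pmod_ge0 // ltW.
Qed.

Lemma disk_sub : @unit_disk R `<=` `[-1, 1]%classic `*` `[-1, 1]%classic.
Proof.
move=> z; rewrite /unit_disk /pmod /= => hz.
have h : z.1 ^+ 2 + z.2 ^+ 2 < 1.
  by rewrite -ltr_sqrt ?sqrtr1 // ltr01.
by rewrite !in_itv /=; split; apply/andP; split; nra.
Qed.

Lemma int_le4 c' n : 0 <= c' ->
  (\int[mu]_(z in @unit_disk R) (gg c' n z)%:E <= 4%:E)%E.
Proof.
move=> c0.
apply: (@le_trans _ _ (\int[mu]_(z in @unit_disk R) (cst 1%:E) z)%E).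
  apply: ge0_le_integral => //.
  - exact: disk_meas.
  - by move=> z _; rewrite lee_fin gg_ge0.
  - exact: gg_meas.
  - by move=> z hz; rewrite lee_fin gg_le1.
rewrite integral_cst; last exact: disk_meas.
rewrite mul1e.
apply: (@le_trans _ _ (mu (`[-1, 1]%classic `*` `[-1, 1]%classic))).
  apply: le_measure; rewrite ?inE; [exact: disk_meas | | exact: disk_sub].
  by apply: measurableX; exact: measurable_itv.
rewrite product_measure1E; try exact: measurable_itv.
have L : (lebesgue_measure (`[(-1)%R, 1%R]%classic : set R) = 2%:E)%E.
  rewrite lebesgue_measure_itv /= lte_fin.
  have -> : ((-1 : R) < 1) = true by apply/idP; lra.
  by rewrite opprK -EFinD.
change ((lebesgue_measure (`[(-1)%R, 1%R]%classic : set R)) * (lebesgue_measure (`[(-1)%R, 1%R]%classic : set R)) <= 4)%E.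
rewrite L -EFinM lee_fin.
lra.
Qed.


Definition rect (d : R) : set (R * R) :=
  `[1 - 2 * d, 1 - 3 / 2 * d]%classic `*` `[0, d / 2]%classic.

Lemma rect_meas d : measurable (rect d).
Proof. by apply: measurableX; exact: measurable_itv. Qed.

Lemma rect_pmod d z : 0 < d <= 1/8 -> rect d z ->
  1 - 2 * d <= pmod z <= 1 - d.
Proof.
move=> /andP[d0 d1]; rewrite /rect /= !in_itv /= => -[/andP[x1 x2] /andP[y1 y2]].
have s0 : 0 <= z.1 ^+ 2 + z.2 ^+ 2 by rewrite addr_ge0 // sqr_ge0.
have hp := sqr_sqrtr s0.
have p0 : 0 <= pmod z := pmod_ge0 z.
rewrite /pmod in p0 *.
set p := Num.sqrt _ in hp p0 *.
apply/andP; split; nra.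
Qed.

Lemma rect_sub d : 0 < d <= 1/8 -> rect d `<=` @unit_disk R.
Proof.
move=> hd z hz; have /andP[_ h] := rect_pmod d z hd hz.
rewrite /unit_disk /=; move/andP: hd => [d0 _]; lra.
Qed.

Lemma gg_rect c' n d z : 0 < c' -> 0 < d <= 1/8 -> rect d z ->
  expR (- (c' / d)) * (1 - 2 * d) ^+ (2 * n) <= gg c' n z.
Proof.
move=> c0 hd hz; have /andP[h1 h2] := rect_pmod d z hd hz.
move/andP: hd => [d0 d1].
rewrite /gg /Gfun; apply: ler_pM.
- exact: expR_ge0.
- apply: exprn_ge0; lra.
- rewrite ler_expR lerN2; apply: ler_wpM2l; first exact: ltW.
  rewrite lef_pV2 ?posrE //; lra.
- by apply: lerXn2r => //; rewrite nnegrE; try lra; exact: pmod_ge0.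
Qed.

Lemma int_ge c' n d : 0 < c' -> 0 < d <= 1/8 ->
  (((d / 2) * (d / 2) * (expR (- (c' / d)) * (1 - 2 * d) ^+ (2 * n)))%:E <=
   \int[mu]_(z in @unit_disk R) (gg c' n z)%:E)%E.
Proof.
move=> c0 hd; have /andP[d0 d1] := hd.
set K := expR (- (c' / d)) * (1 - 2 * d) ^+ (2 * n).
have K0 : 0 <= K by rewrite mulr_ge0 ?expR_ge0 // exprn_ge0 //; lra.
apply: (@le_trans _ _ (\int[mu]_(z in rect d) (gg c' n z)%:E)%E); last first.
  apply: ge0_subset_integral.
  - exact: rect_meas.
  - exact: disk_meas.
  - by apply: gg_meas; rewrite ltW.
  - by move=> z _; rewrite lee_fin gg_ge0.
  - exact: rect_sub.
apply: (@le_trans _ _ (\int[mu]_(z in rect d) (cst K%:E) z)%E); last first.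
  apply: ge0_le_integral.
  - exact: rect_meas.
  - by move=> z _; rewrite lee_fin.
  - exact: measurable_cst.
  - apply: (measurable_funS (disk_meas) (rect_sub d hd)).
    by apply: gg_meas; rewrite ltW.
  - by move=> z hz; rewrite lee_fin gg_rect.
rewrite integral_cst; last exact: rect_meas.
change (((d / 2) * (d / 2) * K)%:E <= K%:E * (((@lebesgue_measure R) \x (@lebesgue_measure R)) (rect d)))%E.
rewrite /rect product_measure1E; try exact: measurable_itv.
have L1 : (lebesgue_measure (`[(1 - 2 * d)%R, (1 - 3 / 2 * d)%R]%classic : set R) = (d / 2)%:E)%E.
  rewrite lebesgue_measure_itv /= lte_fin.
  have -> : (1 - 2 * d < 1 - 3 / 2 * d) = true by apply/idP; lra.
  by rewrite -EFinD; congr (_%:E); lra.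
have L2 : (lebesgue_measure (`[0%R, (d / 2)%R]%classic : set R) = (d / 2)%:E)%E.
  rewrite lebesgue_measure_itv /= lte_fin.
  have -> : (0 < d / 2) = true by apply/idP; lra.
  by rewrite -EFinD; congr (_%:E); lra.
change (((d / 2) * (d / 2) * K)%:E <= K%:E * ((lebesgue_measure (`[(1 - 2 * d)%R, (1 - 3 / 2 * d)%R]%classic : set R)) * (lebesgue_measure (`[0%R, (d / 2)%R]%classic : set R))))%E.
by rewrite L1 L2 -!EFinM lee_fin mulrC.
Qed.


Lemma Mseq_ge c' n d : 0 < c' -> 0 < d <= 1/8 ->
  (pi : R)^-1 * ((d / 2) * (d / 2) * (expR (- (c' / d)) * (1 - 2 * d) ^+ (2 * n)))
  <= Mseq c' n.
Proof.
move=> c0 hd; have /andP[d0 d1] := hd.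
have := int_ge c' n d c0 hd.
have := int_le4 c' n (ltW c0).
set I := (\int[mu]_(z in @unit_disk R) (gg c' n z)%:E)%E => Ile Ige.
have L0 : 0 <= (d / 2) * (d / 2) * (expR (- (c' / d)) * (1 - 2 * d) ^+ (2 * n)).
  by rewrite !mulr_ge0 ?expR_ge0 // ?exprn_ge0 //; lra.
have I0 : (0 <= I)%E by apply: le_trans Ige; rewrite lee_fin.
have Ifin : I \is a fin_num.
  by rewrite ge0_fin_numE //; apply: le_lt_trans Ile _; exact: ltry.
change (pi^-1 * ((d / 2) * (d / 2) * (expR (- (c' / d)) * (1 - 2 * d) ^+ (2 * n)))
  <= fine ((pi^-1)%:E * I)%E).
rewrite -(fineK Ifin) -EFinM /=.
apply: ler_wpM2l; first by rewrite invr_ge0 pi_ge0.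
by rewrite -lee_fin fineK.
Qed.

End S.

Section S2.
Variable R : realType.

Lemma cmod_ge0 (z : R[i]) : 0 <= cmod z.
Proof. by rewrite /cmod /ComplexField.Normc.normc; case: z => a b; exact: sqrtr_ge0. Qed.

Lemma expR_le1B (x : R) : 0 <= x <= 1/2 -> expR (- (2 * x)) <= 1 - x.
Proof.
move=> /andP[x0 x1].
have h := expR_ge1Dx (2 * x).
have e0 := expR_gt0 (2 * x).
rewrite expRN -[_^-1]mul1r ler_pdivrMr //.
nra.
Qed.

Lemma tele (N : nat) :
  \sum_(0 <= i < N) ((i.+1%:R * i.+2%:R)^-1 : R) = 1 - (N.+1%:R)^-1.
Proof.
elim: N => [|N IH]; first by rewrite big_geq // invr1 subrr.
rewrite big_nat_recr //= IH.
have n0 : (0 : R) <= N%:R by rewrite ler0n.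
field; apply/andP; split; rewrite gt_eqF //; lra.
Qed.


Lemma series_bound (a : nat -> R) (C : R) : (forall n, 0 <= a n) ->
  (forall n, a n <= C / (n.+1%:R * n.+2%:R)) ->
  (\sum_(0 <= n <oo) (a n)%:E < +oo)%E.
Proof.
move=> a0 aC.
have C0 : 0 <= C.
  have := le_trans (a0 0%N) (aC 0%N).
  by rewrite pmulr_lge0 // invr_gt0 mulr_gt0 // ltr0n.
apply: (@le_lt_trans _ _ C%:E); last exact: ltry.
apply: lime_le.
  by apply: is_cvg_nneseries => n _ _; rewrite lee_fin.
apply: nearW => N.
rewrite sumEFin lee_fin.
apply: (@le_trans _ _ (\sum_(0 <= i < N) (C / (i.+1%:R * i.+2%:R)))).
  by apply: ler_sum => i _; exact: aC.
rewrite -mulr_sumr tele.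
rewrite ler_piMr // lerBlDr lerDl invr_ge0 ler0n //.
Qed.

End S2.

Lemma final_ineq (R : realType) (cm F D v L B : R) :
  0 <= cm -> 1 <= F -> 0 <= D -> 0 <= v -> 0 <= L ->
  cm * F ^+ 2 <= B -> D <= 2 * v ^+ 4 -> v ^+ 6 <= L ^+ 6 * F ->
  cm ^+ 2 * D * (v ^+ 2 * F) <= 2 * B ^+ 2 * L ^+ 6.
Proof.
move=> cm0 F1 D0 v0 L0 h1 h2 h3.
have F0 : 0 <= F by lra.
have s1 : cm ^+ 2 * D * (v ^+ 2 * F) <= cm ^+ 2 * (2 * v ^+ 4) * (v ^+ 2 * F).
  by apply: ler_wpM2r; [rewrite mulr_ge0 // exprn_ge0 | apply: ler_wpM2l; rewrite ?sqr_ge0].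
apply: (le_trans s1).
have e1 : cm ^+ 2 * (2 * v ^+ 4) * (v ^+ 2 * F) = 2 * cm ^+ 2 * F * v ^+ 6 by ring.
rewrite e1.
have s2 : 2 * cm ^+ 2 * F * v ^+ 6 <= 2 * cm ^+ 2 * F * (L ^+ 6 * F).
  by apply: ler_wpM2l => //; rewrite !mulr_ge0 // sqr_ge0.
apply: (le_trans s2).
have e2 : 2 * cm ^+ 2 * F * (L ^+ 6 * F) = 2 * L ^+ 6 * (cm * F) ^+ 2 by ring.
rewrite e2 -mulrA [X in _ <= X]mulrAC -mulrA.
apply: ler_wpM2l => //.
apply: ler_wpM2l; first by rewrite exprn_ge0.
have cF0 : 0 <= cm * F by rewrite mulr_ge0.
have s3 : cm * F <= cm * F ^+ 2.
  by apply: ler_wpM2l => //; rewrite expr2 ler_peMl //.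
apply: lerXn2r; rewrite ?nnegrE //; last exact: le_trans s3 h1.
exact: le_trans cF0 (le_trans s3 h1).
Qed.

Lemma div_le (R : realType) (a M C D : R) : 0 < M -> 0 < D -> a * D <= C * M -> a / M <= C / D.
Proof. by move=> M0 D0 h; rewrite ler_pdivrMr // mulrAC ler_pdivlMr. Qed.

Theorem mainTheorem14 (R : realType) (f : nat -> R[i]) (c : R) :
  0 < c ->
  (exists B : R, forall n : nat, cmod (f n) * expR (c * Num.sqrt (n%:R)) <= B) ->
  exists c' : R, 0 < c' /\ in_H2star (Mseq c') f.
Proof.
move=> c0 [B hB].
have B0 : 0 <= B.
  by apply: le_trans (hB 0%N); rewrite mulr_ge0 ?cmod_ge0 ?expR_ge0.
pose t := c / (32 * (1 + c)).
have t32 : t * (32 * (1 + c)) = c by rewrite /t divfK // gt_eqF //; lra.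
have t0 : 0 < t by rewrite /t divr_gt0 //; lra.
have t1 : t <= 1/8 by nra.
have tc : 32 * t <= c by nra.
pose c' := t * c / 4.
have c'0 : 0 < c' by rewrite /c' divr_gt0 // mulr_gt0.
pose L := (12 + c) / c.
have L0 : 0 <= L by rewrite /L divr_ge0 //; lra.
pose Kc := (pi : R)^-1 * (t ^+ 2 / 4) * expR (- (c / 4)).
have Kc0 : 0 < Kc.
  apply: mulr_gt0; [apply: mulr_gt0 | exact: expR_gt0]; [by rewrite invr_gt0 pi_gt0 | by rewrite divr_gt0 // exprn_gt0].
pose C := 2 * B ^+ 2 * L ^+ 6 / Kc.
exists c'; split => //.
rewrite /in_H2star.
have key : forall n, 0 < Mseq c' n /\
    (cmod (f n)) ^+ 2 / Mseq c' n <= C / (n.+1%:R * n.+2%:R).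
  move=> n.
  pose u := Num.sqrt (n%:R : R).
  have u0 : 0 <= u := sqrtr_ge0 _.
  have hu2 : u ^+ 2 = n%:R by rewrite sqr_sqrtr // ler0n.
  pose E := expR (c * u / 12).
  have E1 : 1 + c * u / 12 <= E := expR_ge1Dx _.
  have E0 : 0 < E := expR_gt0 _.
  have Ege1 : 1 <= E.
    apply: le_trans E1; rewrite lerDl divr_ge0 // mulr_ge0 //; exact: ltW.
  have E12 : expR (c * u) = E ^+ 12.
    by rewrite -expRM_natl; congr expR; field.
  have hcm : cmod (f n) * (E ^+ 6) ^+ 2 <= B.
    by rewrite -exprM -E12; exact: hB.
  pose d := t / (u + 1).
  have d0 : 0 < d by rewrite /d divr_gt0 //; lra.
  have d1 : d <= 1/8.
    rewrite /d ler_pdivrMr; last lra.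
    nra.
  have hd : 0 < d <= 1/8 by rewrite d0 d1.
  have hM := @Mseq_ge R c' n d c'0 hd.
  set M := Mseq c' n in hM *.
  have P0 : 0 < (1 - 2 * d) ^+ (2 * n) by rewrite exprn_gt0 //; lra.
  have M0 : 0 < M.
    apply: lt_le_trans hM.
    rewrite !mulr_gt0 ?invr_gt0 ?pi_gt0 ?expR_gt0 //; lra.
  split => //.
  have hX : expR (- (c' / d)) * E ^+ 3 = expR (- (c / 4)).
    rewrite -expRM_natl -expRD; congr expR; rewrite /c' /d /E.
    field; apply/andP; split; rewrite gt_eqF //; lra.
  have hdn : d * n%:R <= t * u.
    rewrite -hu2 /d mulrAC ler_pdivrMr; last lra.
    nra.
  have hP : 1 <= (1 - 2 * d) ^+ (2 * n) * E ^+ 3.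
    have a1 : expR (- (2 * (2 * d))) ^+ (2 * n) <= (1 - 2 * d) ^+ (2 * n).
      apply: lerXn2r; rewrite ?nnegrE ?expR_ge0 //; first lra.
      apply: expR_le1B; apply/andP; split; lra.
    apply: le_trans (ler_wpM2r (exprn_ge0 _ (ltW E0)) a1).
    rewrite -!expRM_natl -expRD -[X in X <= _]expR0 ler_expR natrM.
    have e : (2%:R * n%:R * - (2 * (2 * d)) + 3%:R * (c * u / 12))
      = c * u / 4 - 8 * (d * n%:R).
      by field.
    rewrite e subr_ge0.
    nra.
  have hL : u + 1 <= L * E.
    apply: (@le_trans _ _ (L * (1 + c * u / 12))); last first.
      by apply: ler_wpM2l.
    have e : L * (1 + c * u / 12) = (12 + c) / c + u + c * u / 12.
      rewrite /L; field; rewrite gt_eqF //.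
    rewrite e.
    have : 1 <= (12 + c) / c by rewrite ler_pdivlMr //; lra.
    have : 0 <= c * u / 12 by rewrite divr_ge0 // mulr_ge0 // ltW.
    lra.
  have hK : Kc <= M * ((u + 1) ^+ 2 * E ^+ 6).
    have W0 : 0 <= (u + 1) ^+ 2 * E ^+ 6 by rewrite mulr_ge0 // exprn_ge0 // ?ltW //; lra.
    apply: le_trans (ler_wpM2r W0 hM).
    have e : (pi : R)^-1 * (d / 2 * (d / 2) * (expR (- (c' / d)) * (1 - 2 * d) ^+ (2 * n))) *
       ((u + 1) ^+ 2 * E ^+ 6) =
       (pi : R)^-1 * (d / 2 * (d / 2) * (u + 1) ^+ 2) * (expR (- (c' / d)) * E ^+ 3) *
       ((1 - 2 * d) ^+ (2 * n) * E ^+ 3) by ring.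
    rewrite e hX.
    have e2 : d / 2 * (d / 2) * (u + 1) ^+ 2 = t ^+ 2 / 4.
      rewrite /d; field; rewrite gt_eqF //; lra.
    rewrite e2 /Kc -[X in X <= _]mulr1.
    apply: ler_wpM2l => //.
    by rewrite mulr_ge0 ?expR_ge0 // mulr_ge0 ?invr_ge0 ?pi_ge0 // divr_ge0 // sqr_ge0.
  have D0 : 0 < (n.+1%:R * n.+2%:R : R) by rewrite mulr_gt0 // ltr0n.
  have eD : (n.+1%:R * n.+2%:R : R) = (u ^+ 2 + 1) * (u ^+ 2 + 2).
    by rewrite hu2 !mulrSr; ring.
  have hD : (n.+1%:R * n.+2%:R : R) <= 2 * (u + 1) ^+ 4.
    rewrite eD; nra.
  have hv : (u + 1) ^+ 6 <= L ^+ 6 * E ^+ 6.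
    rewrite -exprMn; apply: lerXn2r; rewrite ?nnegrE //; [lra | exact: mulr_ge0 L0 (ltW E0)].
  have cm0 := @cmod_ge0 R (f n).
  have fin := @final_ineq R _ _ _ _ _ _ cm0 (exprn_ege1 6 Ege1) (ltW D0) (_ : 0 <= u + 1) L0 hcm hD hv.
  apply: div_le => //.
  have -> : C * M = (2 * B ^+ 2 * L ^+ 6 * M) / Kc.
    by rewrite /C; field; rewrite gt_eqF.
  rewrite ler_pdivlMr //.
  have cD0 : 0 <= cmod (f n) ^+ 2 * (n.+1%:R * n.+2%:R) by rewrite mulr_ge0 // sqr_ge0.
  apply: le_trans (ler_wpM2l cD0 hK) _.
  rewrite mulrCA [X in _ <= X]mulrC; apply: ler_wpM2l; first exact: ltW.
  apply: fin; lra.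
apply: (@series_bound R _ C).
  by move=> n; have [M0 _] := key n; rewrite divr_ge0 // ?sqr_ge0 // ltW.
by move=> n; have [_ h] := key n.
Qed.
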